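(* Let $\overline{\mathcal R}(D)$ be defined exactly as $\mathcal R_{Y-X-Z}(D)$ except that the joint distribution is allowed to be of the form $p(x,y,z,u,w)=p(x,y)p(z|x)p(u|y)p(w|x,u,y)$. Then $\overline{\mathcal R}(D)=\mathcal R_{Y-X-Z}(D)$.
   Context: Let $\mathcal X,\mathcal Y,\mathcal Z,\hat{\mathcal X}$ be finite alphabets, $d:\mathcal X\times\hat{\mathcal X}\to[0,\infty)$ a distortion measure, and $(X,Y,Z)\sim p(x,y)p(z|x)$. $\mathcal R_{Y-X-Z}(D)$ is the set of all pairs $(R,R_1)$ with $R_1\ge I(U;Y|Z)$ and $R\ge I(X;W|U,Z)$ for some finite-alphabet random variables $U,W$ with joint distribution $p(x,y,z,u,w)=p(x,y)p(z|x)p(u|y)p(w|x,u)$ and a deterministic function $\hat X(U,W,Z)$ with $\mathbb E\, d(X,\hat X(U,W,Z))\le D$. *)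

(* Defs.v *)
From HB Require Import structures.
From mathcomp Require Import all_boot all_order all_algebra.
From mathcomp Require Import reals exp.
Set Implicit Arguments. Unset Strict Implicit. Unset Printing Implicit Defensive.
Import Order.TTheory GRing.Theory Num.Theory.
Local Open Scope ring_scope.

Section InfoDefs.
Variable R : realType.

Definition log2 (x : R) : R := ln x / ln 2.

Definition is_pmf (T : finType) (p : T -> R) : Prop :=
  (forall t, 0 <= p t) /\ \sum_(t : T) p t = 1.

Definition is_kernel (S T : finType) (k : S -> T -> R) : Prop :=
  forall s, is_pmf (k s).

(* Conditional mutual information I(A;B|C) (in bits) where A = fa(t),
   B = fb(t), C = fc(t) and t is distributed according to the pmf P on T;
   convention 0 log(...) = 0. *)
Definition cond_mutinfo (T A B C : finType) (P : T -> R)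
    (fa : T -> A) (fb : T -> B) (fc : T -> C) : R :=
  let pABC a b c := \sum_(t | (fa t == a) && (fb t == b) && (fc t == c)) P t in
  let pAC a c := \sum_(t | (fa t == a) && (fc t == c)) P t in
  let pBC b c := \sum_(t | (fb t == b) && (fc t == c)) P t in
  let pC c := \sum_(t | fc t == c) P t in
  \sum_(a : A) \sum_(b : B) \sum_(c : C)
     (if pABC a b c == 0 then 0
      else pABC a b c * log2 (pABC a b c * pC c / (pAC a c * pBC b c))).

Variables (X Y Z Xh : finType) (d : X -> Xh -> R)
  (pXY : X -> Y -> R) (pZgX : X -> Z -> R).

Section Joint.
Variables (U W : finType).
Definition xX (t : X * Y * Z * U * W) : X := t.1.1.1.1.
Definition xY (t : X * Y * Z * U * W) : Y := t.1.1.1.2.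
Definition xZ (t : X * Y * Z * U * W) : Z := t.1.1.2.
Definition xU (t : X * Y * Z * U * W) : U := t.1.2.
Definition xW (t : X * Y * Z * U * W) : W := t.2.
Definition xUZ (t : X * Y * Z * U * W) : U * Z := (xU t, xZ t).

Definition achieves (P : X * Y * Z * U * W -> R) (xhat : U -> W -> Z -> Xh)
    (D Rt R1 : R) : Prop :=
  [/\ R1 >= cond_mutinfo P xU xY xZ,
      Rt >= cond_mutinfo P xX xW xUZ &
      \sum_(t : X * Y * Z * U * W) P t * d (xX t) (xhat (xU t) (xW t) (xZ t))
        <= D].
End Joint.

Definition in_region_YXZ (D Rt R1 : R) : Prop :=
  exists (U W : finType) (pUgY : Y -> U -> R) (pWgXU : X * U -> W -> R)
         (xhat : U -> W -> Z -> Xh),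
    [/\ is_kernel pUgY, is_kernel pWgXU &
        achieves (fun t => pXY (xX t) (xY t) * pZgX (xX t) (xZ t)
                           * pUgY (xY t) (xU t) * pWgXU (xX t, xU t) (xW t))
                 xhat D Rt R1].

Definition in_region_bar (D Rt R1 : R) : Prop :=
  exists (U W : finType) (pUgY : Y -> U -> R) (pWgXUY : X * U * Y -> W -> R)
         (xhat : U -> W -> Z -> Xh),
    [/\ is_kernel pUgY, is_kernel pWgXUY &
        achieves (fun t => pXY (xX t) (xY t) * pZgX (xX t) (xZ t)
                           * pUgY (xY t) (xU t)
                           * pWgXUY (xX t, xU t, xY t) (xW t))
                 xhat D Rt R1].
End InfoDefs.

(* Main.v *)
Require Import Defs.
From HB Require Import structures.
From mathcomp Require Import all_boot all_order all_algebra.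
From mathcomp Require Import reals exp.
From mathcomp Require Import ring.
Import Order.TTheory GRing.Theory Num.Theory.
Local Open Scope ring_scope.

Set Implicit Arguments. Unset Strict Implicit.
Section H.
Variable R : realType.

Lemma wsum_eq (T S : finType) (f : T -> S) (P Q : T -> R) :
  (forall s, \sum_(t | f t == s) P t = \sum_(t | f t == s) Q t) ->
  forall g : T -> R, (forall t t', f t = f t' -> g t = g t') ->
  \sum_t P t * g t = \sum_t Q t * g t.
Proof.
move=> hm g hg.
rewrite (partition_big f predT) //= [RHS](partition_big f predT) //=.
apply: eq_bigr => s _.
case: (pickP (fun t => f t == s)) => [t0 /eqP ft0 | none].
- rewrite (eq_bigr (fun i => P i * g t0)); last first.
    by move=> i /eqP fi; rewrite (hg i t0) // fi ft0.
  rewrite [RHS](eq_bigr (fun i => Q i * g t0)); last first.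
    by move=> i /eqP fi; rewrite (hg i t0) // fi ft0.
  by rewrite -!big_distrl /= hm.
- by rewrite !big_pred0 // => i; rewrite none.
Qed.

Lemma psum_eq (T S : finType) (f : T -> S) (P Q : T -> R) :
  (forall s, \sum_(t | f t == s) P t = \sum_(t | f t == s) Q t) ->
  forall p : pred T, (forall t t', f t = f t' -> p t = p t') ->
  \sum_(t | p t) P t = \sum_(t | p t) Q t.
Proof.
move=> hm p hp; rewrite !big_mkcond.
have := wsum_eq hm (g := fun t => (p t)%:R).
rewrite (eq_bigr (fun t => if p t then P t else 0)); last first.
  by move=> t _; case: (p t); rewrite ?mulr1 ?mulr0.
rewrite [\sum_t Q t * _](eq_bigr (fun t => if p t then Q t else 0)); last first.
  by move=> t _; case: (p t); rewrite ?mulr1 ?mulr0.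
move=> H; rewrite [RHS]big_mkcond; apply: H => t t' e; by rewrite (hp t t' e).
Qed.

Lemma cmi_eq (T S A B C : finType) (f : T -> S) (P Q : T -> R)
  (fa : T -> A) (fb : T -> B) (fc : T -> C) :
  (forall s, \sum_(t | f t == s) P t = \sum_(t | f t == s) Q t) ->
  (forall t t', f t = f t' -> fa t = fa t') ->
  (forall t t', f t = f t' -> fb t = fb t') ->
  (forall t t', f t = f t' -> fc t = fc t') ->
  cond_mutinfo P fa fb fc = cond_mutinfo Q fa fb fc.
Proof.
move=> hm ha hb hc; rewrite /cond_mutinfo /=.
apply: eq_bigr => a _; apply: eq_bigr => b _; apply: eq_bigr => c _.
by rewrite !(psum_eq hm) // => t t' e; rewrite ?(ha _ _ e) ?(hb _ _ e) ?(hc _ _ e).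
Qed.

Lemma marg_kernel (T1 W S : finType) (f : T1 * W -> S) (A : T1 -> R)
  (K1 K2 : T1 -> W -> R) :
  (forall t1, \sum_w K1 t1 w = 1) -> (forall t1, \sum_w K2 t1 w = 1) ->
  (forall t1 w w', f (t1, w) = f (t1, w')) ->
  forall s, \sum_(t | f t == s) A t.1 * K1 t.1 t.2
          = \sum_(t | f t == s) A t.1 * K2 t.1 t.2.
Proof.
move=> h1 h2 hf s.
have E K : \sum_(t | f t == s) A t.1 * K t.1 t.2 =
    \sum_i \sum_j (if f (i, j) == s then A i * K i j else 0).
  by rewrite big_mkcond pair_bigA; apply: eq_bigr => -[i j] _.
rewrite !E; apply: eq_bigr => i _.
case: (pickP (fun _ : W => true)) => [w0 _ | none]; last first.
  by rewrite !big_pred0.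
rewrite (eq_bigr (fun j => if f (i, w0) == s then A i * K1 i j else 0)); last first.
  by move=> j _; rewrite (hf i j w0).
rewrite [RHS](eq_bigr (fun j => if f (i, w0) == s then A i * K2 i j else 0)); last first.
  by move=> j _; rewrite (hf i j w0).
case: (f (i, w0) == s); last by rewrite !big1.
by rewrite -!mulr_sumr h1 h2.
Qed.

Lemma marg_y (X Y Z U W : finType) (F : X * Y * Z * U * W -> R) x0 w0 u0 z0 :
  \sum_(t | (xX t, xW t, xU t, xZ t) == (x0, w0, u0, z0)) F t
  = \sum_(y : Y) F (x0, y, z0, u0, w0).
Proof.
rewrite (partition_big (@xY X Y Z U W) predT) //=; apply: eq_bigr => y _.
apply: big_pred1 => -[[[[x y'] z] u] w] /=.
rewrite /xX /xY /xZ /xU /xW /= !xpair_eqE.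
by case: (x == x0); case: (y' == y); case: (z == z0); case: (u == u0); case: (w == w0).
Qed.

End H.

Theorem lemma3 (R : realType) (X Y Z Xh : finType) (d : X -> Xh -> R)
  (pXY : X -> Y -> R) (pZgX : X -> Z -> R)
  (hd : forall x xh, 0 <= d x xh)
  (hpXY : is_pmf (fun xy : X * Y => pXY xy.1 xy.2))
  (hpZ : is_kernel pZgX)
  (D : R) :
  forall Rt R1 : R,
    in_region_bar d pXY pZgX D Rt R1 <-> in_region_YXZ d pXY pZgX D Rt R1.
Proof.
move=> Rt R1; split; last first.
  case=> U [W [pU [pW [xh [hU hW h]]]]].
  exists U, W, pU, (fun xuy : X * U * Y => pW (xuy.1.1, xuy.1.2)), xh; split => //.
case=> U [W [pU [pWb [xh [hU hWb [h1 h2 h3]]]]]].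
have [y0 _] : exists y0 : Y, true.
  case: (pickP (fun _ : X * Y => true)) => [[x1 y0] _ | none]; first by exists y0.
  by move: hpXY => [_]; rewrite big_pred0 // => /eqP; rewrite eq_sym oner_eq0.
have pXY0 : forall x y, 0 <= pXY x y by move=> x y; exact: (hpXY.1 (x, y)).
pose Den x u := \sum_y pXY x y * pU y u.
pose Num x u w := \sum_y pXY x y * pU y u * pWb (x, u, y) w.
pose pW (xu : X * U) w := if Den xu.1 xu.2 == 0 then pWb (xu.1, xu.2, y0) w
                          else Num xu.1 xu.2 w / Den xu.1 xu.2.
have hpW : is_kernel pW.
  rewrite /is_kernel; move=> [x u]; rewrite /pW /=; have [hD|hD] := eqVneq (Den x u) 0; first exact: hWb.
  split.
    move=> w; apply: divr_ge0; apply: sumr_ge0 => y _.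
      by apply: mulr_ge0; [apply: mulr_ge0 => //; exact: (hU y).1 | exact: (hWb _).1].
    by apply: mulr_ge0 => //; exact: (hU y).1.
  rewrite -mulr_suml /Num exchange_big /=.
  rewrite (eq_bigr (fun y => pXY x y * pU y u)); last first.
    by move=> y _; rewrite -mulr_sumr (hWb _).2 mulr1.
  by rewrite mulfV.
exists U, W, pU, pW, xh; split => //.
have m1 : forall s : U * Y * Z,
  \sum_(t : X * Y * Z * U * W | (xU t, xY t, xZ t) == s)
     pXY (xX t) (xY t) * pZgX (xX t) (xZ t) * pU (xY t) (xU t) * pWb (xX t, xU t, xY t) (xW t)
  = \sum_(t : X * Y * Z * U * W | (xU t, xY t, xZ t) == s)
     pXY (xX t) (xY t) * pZgX (xX t) (xZ t) * pU (xY t) (xU t) * pW (xX t, xU t) (xW t).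
  exact: (@marg_kernel R _ W _ _ (fun t1 : X * Y * Z * U => pXY t1.1.1.1 t1.1.1.2 * pZgX t1.1.1.1 t1.1.2 * pU t1.1.1.2 t1.2)
     (fun t1 w => pWb (t1.1.1.1, t1.2, t1.1.1.2) w) (fun t1 w => pW (t1.1.1.1, t1.2) w)
     (fun t1 => (hWb _).2) (fun t1 => (hpW _).2) _).
have m2 : forall s : X * W * U * Z,
  \sum_(t : X * Y * Z * U * W | (xX t, xW t, xU t, xZ t) == s)
     pXY (xX t) (xY t) * pZgX (xX t) (xZ t) * pU (xY t) (xU t) * pWb (xX t, xU t, xY t) (xW t)
  = \sum_(t : X * Y * Z * U * W | (xX t, xW t, xU t, xZ t) == s)
     pXY (xX t) (xY t) * pZgX (xX t) (xZ t) * pU (xY t) (xU t) * pW (xX t, xU t) (xW t).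
  move=> [[[x w] u] z]; rewrite !marg_y /xX /xY /xZ /xU /xW /=.
  rewrite (eq_bigr (fun y => pZgX x z * (pXY x y * pU y u * pWb (x, u, y) w))); last by move=> y _; ring.
  rewrite [RHS](eq_bigr (fun y => pZgX x z * (pXY x y * pU y u) * pW (x, u) w)); last by move=> y _; ring.
  rewrite -mulr_suml -!mulr_sumr -[RHS]mulrA; congr (_ * _).
  rewrite -/(Num x u w) -/(Den x u) /pW /=.
  have [hD|hD] := eqVneq (Den x u) 0; last by rewrite [RHS]mulrC divfK.
  rewrite hD mul0r /Num big1 // => y _.
  rewrite (psumr_eq0P _ hD) ?mul0r // => i _; apply: mulr_ge0 => //; exact: (hU i).1.
rewrite /achieves; split.
- by rewrite -(cmi_eq m1) // => t t' e; case: e => *.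
- rewrite -(cmi_eq m2) // => t t' e; case: e => *; rewrite /xUZ; congruence.
- rewrite -(wsum_eq m2) // => t t' e; case: e => *; congruence.
Qed.
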